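(* Let $p$ be an odd prime, $c\in\mathbb Z_p$ with $c\not\equiv0,\pm1\pmod p$ and $c^2+1\not\equiv0\pmod p$. Then the congruence $x^4-2(c^2+1)x^2+c^2(c^2+1)\equiv0\pmod p$ is solvable if and only if $$\sum_{k=1}^{[p/4]}\binom{4k}{2k}\frac1{(16(c^2+1))^k}\equiv0\pmod p.$$
   Context: $[x]$ is the greatest integer $\le x$; $\mathbb Z_p$ is the set of rational numbers whose denominator is not divisible by $p$. *)

(* Defs.v *)
From HB Require Import structures.
From mathcomp Require Import all_boot all_order all_algebra.
Set Implicit Arguments. Unset Strict Implicit. Unset Printing Implicit Defensive.
Import Order.TTheory GRing.Theory Num.Theory.
Local Open Scope ring_scope.

(* a \in Z_p : the reduced denominator of the rational a is not divisible by p. *)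
Definition in_Zp_loc (p : nat) (a : rat) : bool := ~~ (p %| `|denq a|)%N.

(* For a \in Z_p, "a == 0 (mod p)" : p divides the (reduced) numerator of a. *)
Definition cong0 (p : nat) (a : rat) : bool := (p%:Z %| numq a)%Z.

(* Main.v *)
Require Import Defs.
From HB Require Import structures.
From mathcomp Require Import all_boot all_order all_algebra all_field.
From mathcomp Require Import ring.
Import Order.TTheory GRing.Theory Num.Theory.
Local Open Scope ring_scope.

Lemma intr_Fp0 (p : nat) (z : int) : prime p ->
  ((z%:~R : 'F_p) == 0) = (p %| `|z|)%N.
Proof.
move=> pp; rewrite {1}[z]intEsign intrM mulf_eq0 rmorphXn rmorphN1 /=.
rewrite expf_eq0 oppr_eq0 oner_eq0 andbF /=.
by rewrite (dvdn_pcharf (pchar_Fp pp)).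
Qed.

Definition good (p : nat) (x : rat) (y : 'F_p) := in_Zp_loc p x /\ ratr x = y.

Lemma good_frac (p : nat) (n d : int) : prime p -> ~~ (p %| `|d|)%N ->
  good p (n%:~R / d%:~R) (n%:~R / d%:~R).
Proof.
move=> pp hd; rewrite /good /in_Zp_loc /ratr.
move: hd; case: divqP => [d0|k x k0]; first by rewrite dvdn0.
rewrite abszM Euclid_dvdM // negb_or; case/andP => hk hx.
split=> //.
have k0' : (k%:~R : 'F_p) != 0 by rewrite intr_Fp0.
have x0' : ((denq x)%:~R : 'F_p) != 0 by rewrite intr_Fp0.
by rewrite !intrM invfM mulrACA divff // mul1r.
Qed.

Lemma good_num_den (p : nat) (x : rat) : ratr x = (numq x)%:~R / (denq x)%:~R :> 'F_p.
Proof. by []. Qed.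

Lemma goodD p x y x' y' : prime p -> good p x x' -> good p y y' -> good p (x + y) (x' + y').
Proof.
move=> pp [hx <-] [hy <-].
have dx0 : (denq x) != 0 by rewrite denq_eq0.
have dy0 : (denq y) != 0 by rewrite denq_eq0.
have -> : x + y = (numq x * denq y + numq y * denq x)%:~R / (denq x * denq y)%:~R.
  rewrite -{1}[x]divq_num_den -{1}[y]divq_num_den !intrD !intrM.
  field; rewrite !intr_eq0; apply/andP; split=> //.
have hd : ~~ (p %| `|(denq x * denq y)%R|)%N by rewrite abszM Euclid_dvdM // negb_or; apply/andP; split.
have [hz hr] := good_frac p ((numq x * denq y + numq y * denq x)%R) (denq x * denq y)%R pp hd.
split=> //; rewrite hr /ratr.
have dx0' : ((denq x)%:~R : 'F_p) != 0 by rewrite intr_Fp0.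
have dy0' : ((denq y)%:~R : 'F_p) != 0 by rewrite intr_Fp0.
rewrite !intrD !intrM; field; by rewrite dx0' dy0'.
Qed.

Lemma goodM p x y x' y' : prime p -> good p x x' -> good p y y' -> good p (x * y) (x' * y').
Proof.
move=> pp [hx <-] [hy <-].
have dx0 : (denq x) != 0 by rewrite denq_eq0.
have dy0 : (denq y) != 0 by rewrite denq_eq0.
have -> : x * y = (numq x * numq y)%:~R / (denq x * denq y)%:~R.
  rewrite -{1}[x]divq_num_den -{1}[y]divq_num_den !intrM.
  field; rewrite !intr_eq0; apply/andP; split=> //.
have hd : ~~ (p %| `|(denq x * denq y)%R|)%N by rewrite abszM Euclid_dvdM // negb_or; apply/andP; split.
have [hz hr] := good_frac p ((numq x * numq y)%R) (denq x * denq y)%R pp hd.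
split=> //; rewrite hr /ratr.
have dx0' : ((denq x)%:~R : 'F_p) != 0 by rewrite intr_Fp0.
have dy0' : ((denq y)%:~R : 'F_p) != 0 by rewrite intr_Fp0.
rewrite !intrM; field; by rewrite dx0' dy0'.
Qed.

Lemma goodN p x x' : good p x x' -> good p (- x) (- x').
Proof.
move=> [hx <-]; split; first by rewrite /in_Zp_loc denqN.
by rewrite /ratr numqN denqN intrN mulNr.
Qed.

Lemma good_int p (z : int) : prime p -> good p z%:~R z%:~R.
Proof.
move=> pp; split; last by rewrite ratr_int.
rewrite /in_Zp_loc denq_int absz1 dvdn1; apply/eqP => p1; by rewrite p1 in pp.
Qed.

Lemma good_nat p (n : nat) : prime p -> good p n%:R n%:R.
Proof. by move=> pp; have := good_int p n pp; rewrite !pmulrn. Qed.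

Lemma goodX p x x' k : prime p -> good p x x' -> good p (x ^+ k) (x' ^+ k).
Proof.
move=> pp hx; elim: k => [|k IH]; first by rewrite !expr0; apply: (good_nat p 1 pp).
by rewrite !exprS; apply: goodM.
Qed.

Lemma goodV p x x' : prime p -> good p x x' -> x' != 0 -> good p x^-1 x'^-1.
Proof.
move=> pp [hx <-] hn.
have hn' : ~~ (p %| `|numq x|)%N.
  by rewrite -intr_Fp0 //; apply: contra hn => /eqP h; rewrite /ratr h mul0r.
have -> : x^-1 = (denq x)%:~R / (numq x)%:~R.
  by rewrite -{1}[x]divq_num_den invf_div.
have [hz hr] := good_frac p (denq x) (numq x) pp hn'.
by split=> //; rewrite hr /ratr invf_div.
Qed.

Lemma good_cong0 p x x' : prime p -> good p x x' -> cong0 p x = (x' == 0).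
Proof.
move=> pp [hx <-]; rewrite /cong0 /ratr mulf_eq0 invr_eq0 (intr_Fp0 p (denq x) pp).
by rewrite (negbTE hx) orbF intr_Fp0 // dvdzE.
Qed.

Lemma in_base (F : finFieldType) (L : fieldExtType F) (y : L) :
  y ^+ #|F| = y -> exists t : F, y = t%:A.
Proof.
move=> hy.
case: (boolP (y \in map (in_alg L) (enum F))) => [/mapP [t _ ->]|ny].
  by exists t.
exfalso.
have gt1 : (1 < #|F|)%N by exact: finNzRing_gt1.
have P0 : ('X^#|F| - 'X : {poly L}) != 0.
  by rewrite -size_poly_eq0 size_addl ?size_polyXn ?size_polyN ?size_polyX.
suff: (size (y :: map (in_alg L) (enum F)) < size (('X^#|F| - 'X)%R : {poly L}))%N.
  by rewrite size_addl ?size_polyXn ?size_polyN ?size_polyX // /= size_map -cardT ltnn.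
apply: max_poly_roots => //.
  rewrite /= /root !hornerE hy subrr eqxx /=.
  apply/allP=> z /mapP [t _ ->].
  by rewrite /root !hornerE -rmorphXn /= expf_card subrr.
rewrite /= ny /=; rewrite map_inj_uniq ?enum_uniq //.
exact: fmorph_inj.
Qed.

Lemma sqrt_ext (F : finFieldType) (u : F) :
  exists (L : fieldExtType F) (y : L), y ^+ 2 = u%:A.
Proof.
have nz : ('X^2 - u%:P : {poly F}) != 0.
  by rewrite -size_poly_eq0 size_XnsubC.
have [L [rs Hrs _]] := FinSplittingFieldFor nz.
exists L.
have hs := eqp_size Hrs.
rewrite size_prod_XsubC size_map_poly size_XnsubC // in hs.
case: rs hs Hrs => [//|z rs] _ Hrs.
exists z.
have : root (map_poly (in_alg L) ('X^2 - u%:P)) z.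
  by rewrite (eqp_root Hrs) root_prod_XsubC mem_head.
rewrite rmorphB /= map_polyXn map_polyC /= /root !hornerE subr_eq0.
by move/eqP.
Qed.

Lemma sum_pairs (R : nmodType) (g : nat -> R) m :
  \sum_(i < m.*2) g i = \sum_(k < m) (g k.*2 + g k.*2.+1).
Proof.
elim: m => [|m IH]; first by rewrite !big_ord0.
rewrite doubleS !big_ord_recr /= IH addrA.
by [].
Qed.

Lemma split_id (R : comNzRingType) (y : R) (n : nat) :
  (1 + y) ^+ n + (1 - y) ^+ n = 2 * \sum_(k < n./2.+1) ('C(n, k.*2))%:R * (y ^+ 2) ^+ k.
Proof.
rewrite [1 + y]addrC [1 - y]addrC !exprD1n -big_split /=.
set f := fun i : nat => (y ^+ i + (- y) ^+ i) *+ 'C(n, i).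
have -> : \sum_(i < n.+1) (y ^+ i *+ 'C(n, i) + (- y) ^+ i *+ 'C(n, i)) = \sum_(i < n.+1) f i.
  by apply: eq_bigr => i _; rewrite /f mulrnDl.
have hN : (n.+1 <= (n./2.+1).*2)%N.
  by rewrite doubleS -{1}(odd_double_half n); case: (odd n).
rewrite (big_ord_widen _ f hN) big_mkcond /=.
have -> : \sum_(i < (n./2.+1).*2) (if (i < n.+1)%N then f i else 0) = \sum_(i < (n./2.+1).*2) f i.
  apply: eq_bigr => i _; case: ifP => // hi.
  by rewrite /f bin_small ?mulr0n // ltnNge -ltnS hi.
rewrite sum_pairs big_distrr /=; apply: eq_bigr => k _.
rewrite /f -mul2n.
have e1 : (- y) ^+ (2 * k) = (y ^+ 2) ^+ k by rewrite exprM sqrrN.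
have e2 : y ^+ (2 * k) = (y ^+ 2) ^+ k by rewrite exprM.
have e3 : (- y) ^+ (2 * k).+1 = - (y ^+ (2 * k).+1) by rewrite exprS e1 [y ^+ (2 * k).+1]exprS e2 mulNr.
rewrite e1 e2 e3 addrN mul0rn addr0.
by rewrite -mulr_natl; ring.

Qed.

Lemma fermat (p : nat) (u : 'F_p) : prime p -> u != 0 -> u ^+ p.-1 = 1.
Proof.
move=> pp u0; have h := expf_card u.
have e : #|'F_p| = p.-1.+1 by rewrite card_Fp // prednK // prime_gt0.
apply: (mulfI u0); rewrite mulr1 -exprS -e; exact: h.
Qed.

Lemma euler (p : nat) (u : 'F_p) : prime p -> odd p -> u ^+ p./2 = 1 ->
  exists t, t ^+ 2 = u.
Proof.
move=> pp op hu; have [L [y hy]] := sqrt_ext _ u.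
have : y ^+ #|'F_p| = y.
  have e : #|'F_p| = (2 * p./2).+1 by rewrite card_Fp // mul2n -{1}(odd_double_half p) op.
  rewrite e exprS exprM hy -(rmorphXn (in_alg L)) /= hu.
  by rewrite scale1r mulr1.
case/in_base => t ht; exists t; apply: (fmorph_inj (in_alg L)).
by rewrite rmorphXn /= -ht.
Qed.
Lemma binom_mod (p n : nat) : prime p -> p = n.*2.+1 -> forall m, (m <= n)%N ->
  ('C(m.*2, m))%:R = (-4) ^+ m * ('C(n, m))%:R :> 'F_p.
Proof.
move=> pp hp; elim=> [|m IH] hm.
  by rewrite !bin0 expr0 mul1r.
have h0 : ((n.*2.+1)%:R : 'F_p) = 0 by rewrite -hp; exact: pchar_Fp_0.
have m0 : ((m.+1)%:R : 'F_p) != 0.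
  rewrite -(dvdn_pcharf (pchar_Fp pp)) gtnNdvd //.
  by rewrite hp ltnS (leq_trans hm) // -addnn leq_addr.
have e1 : (m.+1)%:R * ('C(m.+1.*2, m.+1))%:R = (m.*2.+2)%:R * ('C(m.*2.+1, m))%:R :> 'F_p.
  by rewrite -!natrM doubleS -mul_bin_diag.
have e2 : (m.+1)%:R * ('C(m.*2.+1, m))%:R = (m.*2.+1)%:R * ('C(m.*2, m))%:R :> 'F_p.
  rewrite -!natrM; congr (_%:R).
  have := mul_bin_down (m.*2.+1) m; rewrite /= => ->.
  by congr (_ * _)%N; rewrite -addnn -addSn addnK.
have e3 : (m.+1)%:R * ('C(n, m.+1))%:R = (n%:R - m%:R) * ('C(n, m))%:R :> 'F_p.
  by rewrite -natrB ?(ltnW hm) // -!natrM mul_bin_left.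
rewrite IH ?(ltnW hm) // in e2.
apply: (mulfI m0); apply: (mulfI m0).
rewrite e1 mulrCA e2 exprS.
have -> : (m.+1)%:R * ((m.+1)%:R * (-4 * (-4) ^+ m * ('C(n, m.+1))%:R)) =
  (m.+1)%:R * (-4) * (-4) ^+ m * ((m.+1)%:R * ('C(n, m.+1))%:R) :> 'F_p by ring.
rewrite e3; apply/eqP; rewrite -subr_eq0; apply/eqP.
move: h0; rewrite -!muln2 => h0.
transitivity (2 * (m.+1)%:R * (-4) ^+ m * ('C(n, m))%:R * ((n * 2).+1)%:R : 'F_p); last by rewrite h0 mulr0.
ring.
Qed.
Lemma two_neq0 (p : nat) : prime p -> odd p -> (2 : 'F_p) != 0.
Proof.
move=> pp op; rewrite -(dvdn_pcharf (pchar_Fp pp)); apply/negP => /dvdn_leq h.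
have := prime_gt1 pp; have := h isT => h1 h2.
have e : p = 2%N by apply/eqP; rewrite eqn_leq h1 h2.
by rewrite e in op.
Qed.

Lemma fermat2 (p : nat) (w : 'F_p) : prime p -> odd p -> w != 0 -> w ^+ (2 * p./2) = 1.
Proof.
move=> pp op w0; have := fermat p w pp w0.
have e : p.-1 = (2 * p./2)%N by rewrite mul2n -{1}(odd_double_half p) op.
by rewrite e.
Qed.

Lemma pm1 (p : nat) (w : 'F_p) : prime p -> odd p -> w != 0 -> w ^+ p./2 = 1 \/ w ^+ p./2 = -1.
Proof.
move=> pp op w0; have := fermat2 p w pp op w0; rewrite mulnC exprM => /eqP.
by rewrite sqrf_eq1 => /orP [/eqP ->|/eqP ->]; [left|right].
Qed.

Lemma sqr_eq (F : idomainType) (w r : F) : w ^+ 2 = r ^+ 2 -> w = r \/ w = - r.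
Proof.
move/eqP; rewrite -subr_eq0 subr_sqr mulf_eq0 subr_eq0 addr_eq0.
by case/orP => /eqP ->; [left|right].
Qed.
Lemma sum_red (p : nat) (a : 'F_p) : prime p -> odd p -> a != 0 ->
  \sum_(1 <= k < (p %/ 4).+1) ('C(4 * k, 2 * k))%:R / (16 * a) ^+ k =
  \sum_(k < (p./2)./2.+1) ('C(p./2, k.*2))%:R * (a^-1) ^+ k - 1.
Proof.
move=> pp op a0.
have hp : p = (p./2).*2.+1 by rewrite -{1}(odd_double_half p) op add1n.
have e4 : (p %/ 4 = (p./2)./2)%N by rewrite -!divn2 -divnMA.
rewrite e4 -(big_mkord xpredT (fun k => ('C(p./2, k.*2))%:R * (a^-1) ^+ k)).
rewrite big_ltn // bin0 expr0 mulr1 (addrC 1) addrK.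
apply: eq_big_nat => k /andP [k1 k2].
have hk : (2 * k <= p./2)%N.
  rewrite -(odd_double_half p./2) -mul2n (leq_trans _ (leq_addl _ _)) //.
  by rewrite leq_mul2l /= -ltnS.
have h16 : (16 : 'F_p) != 0.
  have -> : (16 : 'F_p) = 2 ^+ 4 by rewrite -natrX.
  by rewrite expf_neq0 // two_neq0.
rewrite -mul2n (_ : (4 * k = (2 * k).*2)%N); last by rewrite -mul2n mulnA.
rewrite (@binom_mod p p./2 pp hp _ hk) exprM sqrrN.
have -> : ((4 : 'F_p) ^+ 2) = 16 by rewrite -natrX.
rewrite exprMn exprVn; field.
by rewrite !expf_neq0.
Qed.
Lemma caseA (p : nat) (g b : 'F_p) : prime p -> odd p -> g != 0 -> b != 0 ->
  1 - b = g ^+ 2 * b -> b ^+ p./2 = -1 ->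
  \sum_(k < (p./2)./2.+1) ('C(p./2, k.*2))%:R * b ^+ k = 1 -> g ^+ 2 = 1.
Proof.
move=> pp op g0 b0 h2 hbn hE.
have [L [y hy]] := sqrt_ext _ b.
have hy' : y ^+ 2 = in_alg L b := hy.
have pcL : p \in [pchar L] by rewrite pchar_lalg pchar_Fp.
set n := p./2 in hbn hE *.
have hpn : p = (2 * n).+1 by rewrite mul2n -{1}(odd_double_half p) op.
have Ep : forall z : L, z ^+ p = z ^+ (2 * n).+1 by move=> z; congr (_ ^+ _).
have c1 : forall z : L, GRing.comm 1 z by move=> z; rewrite /GRing.comm mul1r mulr1.
have yp : y ^+ p = - y.
  rewrite Ep exprS exprM hy' -rmorphXn hbn rmorphN1 mulrN1 //.
set u := 1 + y; set v := 1 - y.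
have up : u ^+ p = v.
  by rewrite /u -(pFrobenius_autE pcL) pFrobenius_autD_comm // pFrobenius_aut1 pFrobenius_autE yp.
have vp : v ^+ p = u.
  by rewrite /v -(pFrobenius_autE pcL) pFrobenius_autB_comm // pFrobenius_aut1 pFrobenius_autE yp opprK.
have hs : u ^+ n + v ^+ n = 2.
  rewrite /u /v split_id hy'.
  have -> : \sum_(k < n./2.+1) ('C(n, k.*2))%:R * in_alg L b ^+ k = in_alg L 1.
    rewrite -hE rmorph_sum; apply: eq_bigr => k _.
    by rewrite rmorphM rmorph_nat rmorphXn.
  by rewrite rmorph1 mulr1.
have hz : (u ^+ n) ^+ 2 * u = v by rewrite -exprM mulnC -exprSr -Ep.
have hw : (v ^+ n) ^+ 2 * v = u by rewrite -exprM mulnC -exprSr -Ep.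
have hzw : u ^+ n * v ^+ n = -1.
  rewrite -exprMn /u /v mulrC -subr_sqr expr1n hy' -(rmorph1 (in_alg L)) -rmorphB h2.
  by rewrite -rmorphXn exprMn -exprM (fermat2 p g pp op g0) mul1r hbn rmorphN.
have key : (u ^+ n + v ^+ n) ^+ 2 * (u * v) =
   ((u ^+ n) ^+ 2 * u) * v + ((v ^+ n) ^+ 2 * v) * u + 2 * (u ^+ n * v ^+ n) * (u * v) by ring.
rewrite hs hz hw hzw /u /v in key.
have k2 : (4 - 8 * y ^+ 2 : L) = 0.
  transitivity ((2 : L) ^+ 2 * ((1 + y) * (1 - y)) - ((1 - y) * (1 - y) + (1 + y) * (1 + y) + 2 * -1 * ((1 + y) * (1 - y)))).
    ring.
  by rewrite key subrr.
rewrite hy' -[4 : L](rmorph_nat (in_alg L)) -[8 : L](rmorph_nat (in_alg L)) -rmorphM -rmorphB in k2.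
move/eqP: k2; rewrite fmorph_eq0 => /eqP k2.
have two0 := two_neq0 p pp op.
have b2 : b * 2 = 1.
  have : (2 * 2) * (1 - b * 2) = 0 :> 'F_p by rewrite -k2; ring.
  move/eqP; rewrite !mulf_eq0 (negbTE two0) /= subr_eq0 => /eqP <-.
  by [].
transitivity (g ^+ 2 * b * 2); first by rewrite -mulrA b2 mulr1.
by rewrite -h2 mulrBl b2 mul1r; ring.
Qed.
Lemma core (p : nat) (g : 'F_p) : prime p -> odd p -> g != 0 -> g != 1 -> g != -1 ->
  g ^+ 2 + 1 != 0 ->
  (exists x : 'F_p, x ^+ 4 - 2 * (g ^+ 2 + 1) * x ^+ 2 + g ^+ 2 * (g ^+ 2 + 1) = 0) <->
  \sum_(k < (p./2)./2.+1) ('C(p./2, k.*2))%:R * ((g ^+ 2 + 1)^-1) ^+ k = 1.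
Proof.
move=> pp op g0 g1 gm1 a0.
have g21 : g ^+ 2 != 1 by rewrite sqrf_eq1 negb_or g1 gm1.
have g20 : g ^+ 2 != 0 by rewrite expf_neq0.
have two0 := two_neq0 p pp op.
set a := g ^+ 2 + 1 in a0 *.
set b := a^-1.
have b0 : b != 0 by rewrite invr_eq0.
have h2 : 1 - b = g ^+ 2 * b.
  by rewrite /b /a; field; exact: a0.
have quart : forall x, (x ^+ 4 - 2 * a * x ^+ 2 + g ^+ 2 * a = 0) <-> ((x ^+ 2 - a) ^+ 2 = a).
  move=> x; have -> : x ^+ 4 - 2 * a * x ^+ 2 + g ^+ 2 * a = (x ^+ 2 - a) ^+ 2 - a.
    by rewrite /a; ring.
  by split => h; [apply/eqP; rewrite -subr_eq0; apply/eqP | rewrite h subrr].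
set n := p./2.
set S := \sum_(k < n./2.+1) _.
have hS : forall t : 'F_p, t ^+ 2 = b -> (1 + t) ^+ n + (1 - t) ^+ n = 2 * S.
  by move=> t ht; rewrite split_id ht.
case: (pm1 p b pp op b0) => hbn; last first.
  split.
    move=> [x /quart hx]; exfalso.
    have w0 : x ^+ 2 - a != 0.
      by apply: contra a0 => /eqP w0; rewrite -hx w0 expr0n.
    have : b = ((x ^+ 2 - a)^-1) ^+ 2 by rewrite exprVn hx.
    move=> hb; move: hbn; rewrite hb -exprM (fermat2 p _ pp op) ?invr_eq0 //.
    move/eqP; rewrite -subr_eq0 opprK => /eqP; apply/eqP; exact: two0.
  move=> hE; exfalso; move/negP: g21; apply.
  by apply/eqP; apply: (caseA p g b pp op g0 b0 h2 hbn hE).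
have [t ht] := euler p b pp op hbn.
have b1 : b != 1.
  apply: contra g20 => /eqP b1; move: h2; rewrite b1 subrr mulr1 => <-.
  by [].
have t0 : t != 0 by apply: contra b0 => /eqP t0; rewrite -ht t0 expr0n.
set u := 1 + t; set v := 1 - t.
have u0 : u != 0.
  apply: contra b1 => /eqP u0.
  have tm : t = -1 by apply/eqP; rewrite -addr_eq0 addrC -/u u0.
  by rewrite -ht tm sqrrN expr1n.
have v0 : v != 0.
  apply: contra b1 => /eqP v0.
  have tm : t = 1 by apply/eqP; rewrite eq_sym -subr_eq0 -/v v0.
  by rewrite -ht tm expr1n.
have huv : u * v = (g * t) ^+ 2.
  transitivity (1 - t ^+ 2); first by rewrite /u /v; ring.
  by rewrite ht h2 exprMn ht.
have hun : u ^+ n * v ^+ n = 1.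
  by rewrite -exprMn huv -exprM (fermat2 p _ pp op) // mulf_neq0.
have equivS : S = 1 <-> u ^+ n = 1.
  split.
    move=> S1; have := hS t ht; rewrite S1 mulr1 -/u -/v.
    case: (pm1 p u pp op u0) => // hu.
    have hv : v ^+ n = -1 by move: hun; rewrite hu mulN1r => /eqP; rewrite eqr_oppLR => /eqP.
    rewrite hu hv => h; exfalso.
    have h4 : (2 : 'F_p) * 2 = 0.
      transitivity (2 - (-1 + -1) : 'F_p); first by ring.
      by rewrite h subrr.
    by move/eqP: h4; rewrite mulf_eq0 (negbTE two0).
  move=> hu; have hv : v ^+ n = 1 by move: hun; rewrite hu mul1r.
  have := hS t ht; rewrite -/u -/v hu hv => h; apply: (mulfI two0).
  by rewrite -h mulr1.
rewrite equivS.
set r := t^-1.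
have r0 : r != 0 by rewrite invr_eq0.
have ha : a = r ^+ 2 by rewrite /r exprVn ht /b invrK.
have hrt : r * t = 1 by rewrite mulVf.
split.
  move=> [x /quart]; rewrite ha => /sqr_eq [] hx.
    have hux : u = (x / r) ^+ 2.
      rewrite exprMn exprVn; apply: (mulIf (expf_neq0 2 r0)).
      rewrite -mulrA mulVf ?expf_neq0 // mulr1.
      have -> : x ^+ 2 = r ^+ 2 + r by rewrite -[X in _ + X]hx addrC subrK.
      by rewrite /u /r; field.
    have x0 : x / r != 0 by apply: contra u0 => /eqP x0; rewrite hux x0 expr0n.
    by rewrite hux -exprM (fermat2 p _ pp op).
  have hvx : v = (x / r) ^+ 2.
    rewrite exprMn exprVn; apply: (mulIf (expf_neq0 2 r0)).
    rewrite -mulrA mulVf ?expf_neq0 // mulr1.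
    have -> : x ^+ 2 = r ^+ 2 - r by rewrite -[X in _ + X]hx addrC subrK.
    by rewrite /v /r; field.
  have x0 : x / r != 0 by apply: contra v0 => /eqP x0; rewrite hvx x0 expr0n.
  move: hun; rewrite hvx -exprM (fermat2 p _ pp op) // mulr1 //.
move=> hu; have [s hs] := euler p u pp op hu.
exists (r * s); apply/quart; rewrite ha exprMn hs.
have -> : r ^+ 2 * u - r ^+ 2 = r by rewrite /u /r; field.
by [].
Qed.
Arguments good_cong0 {p x x'}.
Arguments goodD {p x y x' y'}.
Arguments goodM {p x y x' y'}.
Arguments goodN {p x x'}.
Arguments goodX {p x x'} k.
Arguments goodV {p x x'}.
Arguments sum_red {p a}.
Arguments core {p g}.
Arguments two_neq0 {p}.

Theorem corollary2p4 (p : nat) (c : rat) :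
  prime p -> odd p -> in_Zp_loc p c ->
  ~~ cong0 p c -> ~~ cong0 p (c - 1) -> ~~ cong0 p (c + 1) ->
  ~~ cong0 p (c ^+ 2 + 1) ->
  (exists x : int,
      cong0 p ((x%:~R : rat) ^+ 4 - 2 * (c ^+ 2 + 1) * (x%:~R) ^+ 2
               + c ^+ 2 * (c ^+ 2 + 1)))
  <->
  cong0 p (\sum_(1 <= k < (p %/ 4).+1)
             ('C(4 * k, 2 * k))%:R / (16 * (c ^+ 2 + 1)) ^+ k).
Proof.
move=> pp op hc c0 cm1 cp1 a0.
pose g : 'F_p := ratr c.
have gc : good p c g by split.
have g1r : good p 1 1 := good_nat p 1 pp.
have ga : good p (c ^+ 2 + 1) (g ^+ 2 + 1) by apply: goodD => //; apply: goodX.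
have g0 : g != 0 by rewrite -(good_cong0 pp gc).
have g1 : g != 1.
  by rewrite -subr_eq0 -(good_cong0 pp (goodD pp gc (goodN g1r))).
have gm1 : g != -1.
  by rewrite -addr_eq0 -(good_cong0 pp (goodD pp gc g1r)).
have ga0 : g ^+ 2 + 1 != 0 by rewrite -(good_cong0 pp ga).
have h16 : (16 : 'F_p) != 0.
  have -> : (16 : 'F_p) = 2 ^+ 4 by rewrite -natrX.
  by rewrite expf_neq0 // two_neq0.
have gS : good p (\sum_(1 <= k < (p %/ 4).+1) ('C(4 * k, 2 * k))%:R / (16 * (c ^+ 2 + 1)) ^+ k)
    (\sum_(1 <= k < (p %/ 4).+1) ('C(4 * k, 2 * k))%:R / (16 * (g ^+ 2 + 1)) ^+ k).
  apply: (big_rec2 (good p)); first exact: (good_nat p 0 pp).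
  move=> k y1 y2 _ hy; apply: goodD => //; apply: goodM => //; first exact: good_nat.
  apply: goodV => //; last by rewrite expf_neq0 // mulf_neq0.
  by apply: goodX => //; apply: goodM => //; exact: (good_nat p 16 pp).
rewrite (good_cong0 pp gS) sum_red // subr_eq0.
apply: (iff_trans _ (rwP eqP)).
apply: (iff_trans _ (core pp op g0 g1 gm1 ga0)).
split.
  move=> [x hx]; exists (x%:~R).
  have gx : good p (x%:~R) (x%:~R) := good_int p x pp.
  have gq : good p ((x%:~R : rat) ^+ 4 - 2 * (c ^+ 2 + 1) * (x%:~R) ^+ 2 + c ^+ 2 * (c ^+ 2 + 1))
     ((x%:~R : 'F_p) ^+ 4 - 2 * (g ^+ 2 + 1) * (x%:~R) ^+ 2 + g ^+ 2 * (g ^+ 2 + 1)).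
    apply: goodD => //; first (apply: goodD => //; first exact: goodX).
      apply: goodN; apply: goodM => //; last exact: goodX.
      by apply: goodM => //; exact: (good_nat p 2 pp).
    by apply: goodM => //; apply: goodX.
  by apply/eqP; rewrite -(good_cong0 pp gq).
move=> [X hX]; exists (nat_of_ord X)%:Z.
have hXe : (((nat_of_ord X)%:Z)%:~R : 'F_p) = X by rewrite -pmulrn natr_Zp.
have gx : good p (((nat_of_ord X)%:Z)%:~R) X by rewrite -[X in good _ _ X]hXe; exact: good_int.
rewrite (good_cong0 pp (x' := X ^+ 4 - 2 * (g ^+ 2 + 1) * X ^+ 2 + g ^+ 2 * (g ^+ 2 + 1))); first by rewrite hX.
apply: goodD => //; first (apply: goodD => //; first exact: goodX).
  apply: goodN; apply: goodM => //; last exact: goodX.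
  by apply: goodM => //; exact: (good_nat p 2 pp).
by apply: goodM => //; apply: goodX.
Qed.
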